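(* For every $0<s\le1$, $$\min\Big\{1-\sum_{i=1}^dp_i^2\;:\;p\in\Delta_d,\ \mathcal{E}_\star(p)\ge s\Big\}=s\,\frac{d-1}{d}.$$
   Context: $d\ge2$. $\Delta_d$ is the set of probability vectors $p=(p_1,\dots,p_d)$, $p_i\ge0$, $\sum_ip_i=1$. With the stellar spectrum $\lambda_j=e^{i\theta_j}$, $\theta_j=\frac{(d-2j+1)\pi}{d}$, define for a probability vector $p$: $\mathcal{E}_\star(p)=\min_{\sigma\in S_d}\big(1-\big|\sum_{i=1}^d\lambda_ip_{\sigma(i)}\big|^2\big)$. *)

(* Defs.v *)
From Stdlib Require Import Reals.
From mathcomp Require Import all_boot all_fingroup.
Set Implicit Arguments.
Unset Strict Implicit.
Unset Printing Implicit Defensive.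

Local Open Scope R_scope.

Definition rsum (d : nat) (f : 'I_d -> R) : R := \big[Rplus/0]_(i < d) f i.

Definition prob_vec (d : nat) (p : 'I_d -> R) : Prop :=
  (forall i, 0 <= p i) /\ rsum (fun i => p i) = 1.

(* Stellar angles, 0-based index j : 'I_d  (paper's index is j+1):
   theta_{j+1} = (d - 2(j+1) + 1) pi / d = (d - 2 j - 1) pi / d. *)
Definition theta (d : nat) (j : 'I_d) : R :=
  (INR d - 2 * INR (nat_of_ord j) - 1) * PI / INR d.

(* |sum_i lambda_i p_{sigma(i)}|^2 with lambda_i = e^{i theta_i},
   written as (real part)^2 + (imaginary part)^2. *)
Definition stellar_abs2 (d : nat) (p : 'I_d -> R) (s : 'S_d) : R :=
  (rsum (fun i => cos (theta i) * p (s i))) ^ 2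
  + (rsum (fun i => sin (theta i) * p (s i))) ^ 2.

(* E_star(p) = min over sigma in S_d of 1 - |...|^2
   (fold of Rmin over the explicit enumeration of S_d, seeded with the
    value at the identity permutation, which is itself in the enumeration). *)
Definition E_star (d : nat) (p : 'I_d -> R) : R :=
  let g := fun s : 'S_d => 1 - stellar_abs2 p s in
  foldr Rmin (g 1%g) (map g (enum [set: 'S_d])).

(* Main.v *)
Require Import Defs.
From Stdlib Require Import Reals Lra.
From HB Require Import structures.
From mathcomp Require Import all_boot all_fingroup.
Set Implicit Arguments.
Unset Strict Implicit.
Local Open Scope R_scope.

Lemma RplusA : associative Rplus. Proof. by move=> x y z; rewrite Rplus_assoc. Qed.
Lemma RplusC : commutative Rplus. Proof. exact: Rplus_comm. Qed.
Lemma Rplus0 : left_id 0 Rplus. Proof. exact: Rplus_0_l. Qed.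
HB.instance Definition _ := Monoid.isComLaw.Build R 0 Rplus RplusA RplusC Rplus0.
HB.instance Definition _ := Monoid.isMulLaw.Build R 0 Rmult Rmult_0_l Rmult_0_r.
HB.instance Definition _ := Monoid.isAddLaw.Build R Rmult Rplus Rmult_plus_distr_r Rmult_plus_distr_l.

Lemma rsum_split d (f g : 'I_d -> R) : rsum (fun i => f i + g i) = rsum f + rsum g.
Proof. by rewrite /rsum big_split. Qed.
Lemma rsum_scal d c (f : 'I_d -> R) : rsum (fun i => c * f i) = c * rsum f.
Proof. by rewrite /rsum big_distrr. Qed.
Lemma rsum_ext d (f g : 'I_d -> R) : (forall i, f i = g i) -> rsum f = rsum g.
Proof. by move=> h; rewrite /rsum; apply: eq_bigr => i _. Qed.
Lemma rsum_const d c : rsum (fun _ : 'I_d => c) = INR d * c.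
Proof. rewrite /rsum big_const_ord; elim: d => [|n IH]; first by rewrite /=; lra.
rewrite iterS IH S_INR; lra. Qed.
Lemma rsum_perm d (s : 'S_d) (f : 'I_d -> R) : rsum (fun i => f (s i)) = rsum f.
Proof. rewrite /rsum [RHS](reindex_inj (@perm_inj _ s)) //. Qed.
Lemma rsum_delta d (k : 'I_d) (f : 'I_d -> R) :
  rsum (fun i => if i == k then f i else 0) = f k.
Proof. rewrite /rsum (bigD1 k) //= eqxx big1 ?Rplus_0_r //.
by move=> i /negbTE ->. Qed.

Lemma tele_cos d n : INR d <> 0 ->
  2 * sin (PI / INR d) * \big[Rplus/0]_(0 <= j < n) cos ((INR d - 2 * INR j - 1) * PI / INR d)
  = sin ((INR d - 2 * INR 0) * PI / INR d) - sin ((INR d - 2 * INR n) * PI / INR d).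
Proof.
move=> hd; elim: n => [|n IH]; first by rewrite big_geq //; lra.
rewrite big_nat_recr // Rmult_plus_distr_l IH.
set x := (INR d - 2 * INR n - 1) * PI / INR d.
set a := PI / INR d.
have e1 : (INR d - 2 * INR n) * PI / INR d = x + a by rewrite /x /a; field.
have e2 : (INR d - 2 * INR n.+1) * PI / INR d = x - a by rewrite /x /a S_INR; field.
rewrite e1 e2 sin_plus sin_minus; ring.
Qed.

Lemma tele_sin d n : INR d <> 0 ->
  2 * sin (PI / INR d) * \big[Rplus/0]_(0 <= j < n) sin ((INR d - 2 * INR j - 1) * PI / INR d)
  = cos ((INR d - 2 * INR n) * PI / INR d) - cos ((INR d - 2 * INR 0) * PI / INR d).
Proof.
move=> hd; elim: n => [|n IH]; first by rewrite big_geq //; lra.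
rewrite big_nat_recr // Rmult_plus_distr_l IH.
set x := (INR d - 2 * INR n - 1) * PI / INR d.
set a := PI / INR d.
have e1 : (INR d - 2 * INR n) * PI / INR d = x + a by rewrite /x /a; field.
have e2 : (INR d - 2 * INR n.+1) * PI / INR d = x - a by rewrite /x /a S_INR; field.
rewrite e1 e2 cos_plus cos_minus; ring.
Qed.

Lemma sin_a_neq d : (2 <= d)%N -> sin (PI / INR d) <> 0.
Proof.
move=> hd.
have h2 : 2 <= INR d by apply: (le_INR 2); apply/leP.
apply: Rgt_not_eq; apply: sin_gt_0.
  apply: Rdiv_lt_0_compat; [exact: PI_RGT_0 | lra].
have := PI_RGT_0 => hp.
apply: (Rmult_lt_reg_r (INR d)); first lra.
rewrite /Rdiv Rmult_assoc Rinv_l; nra.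
Qed.

Lemma sum_cos_theta d : (2 <= d)%N -> rsum (fun i : 'I_d => cos (theta i)) = 0.
Proof.
move=> hd.
have h2 : 2 <= INR d by apply: (le_INR 2); apply/leP.
have hd0 : INR d <> 0 by lra.
have := tele_cos d hd0.
rewrite /rsum /theta -(big_mkord xpredT (fun j => cos ((INR d - 2 * INR j - 1) * PI / INR d))).
move=> h.
have e1 : (INR d - 2 * INR 0) * PI / INR d = PI by rewrite /=; field.
have e2 : (INR d - 2 * INR d) * PI / INR d = - PI by field.
rewrite e1 e2 sin_neg sin_PI in h.
have := sin_a_neq hd => hs.
apply: (Rmult_eq_reg_l (2 * sin (PI / INR d))); last lra.
rewrite h; lra.
Qed.

Lemma sum_sin_theta d : (2 <= d)%N -> rsum (fun i : 'I_d => sin (theta i)) = 0.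
Proof.
move=> hd.
have h2 : 2 <= INR d by apply: (le_INR 2); apply/leP.
have hd0 : INR d <> 0 by lra.
have := tele_sin d hd0.
rewrite /rsum /theta -(big_mkord xpredT (fun j => sin ((INR d - 2 * INR j - 1) * PI / INR d))).
move=> h.
have e1 : (INR d - 2 * INR 0) * PI / INR d = PI by rewrite /=; field.
have e2 : (INR d - 2 * INR d) * PI / INR d = - PI by field.
rewrite e1 e2 cos_neg in h.
have := sin_a_neq hd => hs.
apply: (Rmult_eq_reg_l (2 * sin (PI / INR d))); last lra.
rewrite h; lra.
Qed.

Lemma foldr_min_le d (g : 'S_d -> R) x0 (l : seq 'S_d) s :
  s \in l -> foldr Rmin x0 (map g l) <= g s.
Proof.
elim: l => [|a l IH] //=; rewrite in_cons => /orP [/eqP -> | h].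
  exact: Rmin_l.
apply: Rle_trans (IH h); exact: Rmin_r.
Qed.

Lemma foldr_min_ge d (g : 'S_d -> R) x0 (l : seq 'S_d) s :
  s <= x0 -> (forall t, s <= g t) -> s <= foldr Rmin x0 (map g l).
Proof.
move=> h0 h; elim: l => [|a l IH] //=; exact: Rmin_glb.
Qed.

Lemma Estar_le d (p : 'I_d -> R) (s : 'S_d) : E_star p <= 1 - stellar_abs2 p s.
Proof.
rewrite /E_star; apply: foldr_min_le; by rewrite mem_enum in_setT.
Qed.

Lemma Estar_ge d (p : 'I_d -> R) x :
  (forall s : 'S_d, x <= 1 - stellar_abs2 p s) -> x <= E_star p.
Proof. move=> h; rewrite /E_star; apply: foldr_min_ge => //. Qed.

Lemma rsum_mul d (a b : 'I_d -> R) :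
  rsum a * rsum b = rsum (fun i => rsum (fun j => a i * b j)).
Proof. rewrite /rsum big_distrl; apply: eq_bigr => i _; by rewrite big_distrr. Qed.

Lemma two_trans d (i j i' j' : 'I_d) : i != j -> i' != j' ->
  exists t : 'S_d, t i = i' /\ t j = j'.
Proof.
move=> hij hij'.
set k := tperm i i' j.
have hk : i' != k.
  apply/eqP => e; move: hij; rewrite -(inj_eq (@perm_inj _ (tperm i i'))).
  by rewrite -/k -e tpermL eqxx.
exists (tperm i i' * tperm k j')%g; rewrite !permM tpermL tpermL; split => //.
by rewrite tpermD // eq_sym.
Qed.

Definition Mx d (p : 'I_d -> R) (i j : 'I_d) : R :=
  \big[Rplus/0]_(s : 'S_d) (p (s i) * p (s j)).

Lemma Mx_inv d (p : 'I_d -> R) (t : 'S_d) i j : Mx p (t i) (t j) = Mx p i j.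
Proof.
rewrite /Mx [RHS](reindex_inj (mulgI t)); apply: eq_bigr => s _.
by rewrite !permM. Qed.

Lemma Mx_const d (p : 'I_d -> R) (i0 i1 : 'I_d) : i0 != i1 ->
  forall i j, Mx p i j = if i == j then Mx p i0 i0 else Mx p i0 i1.
Proof.
move=> h01 i j; case: eqP => [<-|/eqP hij].
  by rewrite -(Mx_inv p (tperm i0 i)) tpermR.
have [t [ti tj]] := two_trans h01 hij.
by rewrite -ti -tj Mx_inv.
Qed.

Lemma sum_le (T : finType) (F G : T -> R) :
  (forall x, F x <= G x) -> \big[Rplus/0]_(x : T) F x <= \big[Rplus/0]_(x : T) G x.
Proof.
move=> h; apply: (big_ind2 (fun a b => a <= b)) => //; first lra.
move=> *; lra.
Qed.

Lemma lower d (hd : (2 <= d)%N) (p : 'I_d -> R) (hp : prob_vec p) x (hx : x <= E_star p) :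
  x * (INR d - 1) / INR d <= 1 - rsum (fun i => p i ^ 2).
Proof.
have h0 : (0 < d)%N by apply: leq_trans hd.
have h1 : (1 < d)%N by [].
pose i0 : 'I_d := Ordinal h0.
pose i1 : 'I_d := Ordinal h1.
have h01 : i0 != i1 by [].
pose c := fun i : 'I_d => cos (theta i).
pose sn := fun i : 'I_d => sin (theta i).
have sc : rsum c = 0 by exact: sum_cos_theta.
have ss : rsum sn = 0 by exact: sum_sin_theta.
pose w := fun i j : 'I_d => c i * c j + sn i * sn j.
pose N := \big[Rplus/0]_(s : 'S_d) 1.
pose Q := rsum (fun i => p i ^ 2).
pose al := Mx p i0 i0.
pose be := Mx p i0 i1.
have Mc := Mx_const p h01.
have step1 : forall s : 'S_d, stellar_abs2 p s =
   rsum (fun i => rsum (fun j => w i j * (p (s i) * p (s j)))).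
  move=> s; rewrite /stellar_abs2.
  have sq : forall y, y ^ 2 = y * y by move=> y; ring.
  rewrite !sq !rsum_mul -rsum_split; apply: rsum_ext => i.
  rewrite -rsum_split; apply: rsum_ext => j; rewrite /w /c /sn; ring.
have step2 : \big[Rplus/0]_(s : 'S_d) stellar_abs2 p s =
   rsum (fun i => rsum (fun j => w i j * Mx p i j)).
  rewrite (eq_bigr _ (fun s _ => step1 s)) /rsum exchange_big.
  apply: eq_bigr => i _; rewrite exchange_big; apply: eq_bigr => j _.
  by rewrite /Mx big_distrr.
have step3 : rsum (fun i => rsum (fun j => w i j * Mx p i j)) = INR d * (al - be).
  have e : forall i j, w i j * Mx p i j =
     be * (c i * c j + sn i * sn j) + (if j == i then (al - be) * (c j * c j + sn j * sn j) else 0).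
    move=> i j; rewrite Mc /w eq_sym; case: eqP => [->|_]; rewrite -/al -/be; ring.
  rewrite -rsum_const; apply: rsum_ext => i.
  rewrite (rsum_ext (e i)) rsum_split rsum_delta rsum_scal rsum_split !rsum_scal sc ss.
  have := sin2_cos2 (theta i); rewrite /c /sn /Rsqr; move=> H; rewrite (_ : cos (theta i) * cos (theta i) + sin (theta i) * sin (theta i) = 1); [ring | lra].
have step4 : INR d * al = N * Q.
  have : rsum (fun i => Mx p i i) = N * Q.
    rewrite /rsum /Mx exchange_big /N big_distrl; apply: eq_bigr => s _.
    change (rsum (fun i => p (s i) * p (s i)) = 1 * Q); rewrite Rmult_1_l /Q -(rsum_perm s (fun i => p i ^ 2)); apply: rsum_ext => i /=; ring.
  have e : forall i, Mx p i i = al by move=> i; rewrite Mc eqxx.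
  by rewrite (rsum_ext e) rsum_const.
have step5 : INR d * (INR d * be) + INR d * (al - be) = N.
  have : rsum (fun i => rsum (fun j => Mx p i j)) = N.
    rewrite /rsum /Mx.
    rewrite (eq_bigr (fun i => \big[Rplus/0]_(s : 'S_d) \big[Rplus/0]_(j < d) (p (s i) * p (s j)))); last by move=> i _; rewrite exchange_big.
    rewrite exchange_big /N; apply: eq_bigr => s _.
    change (rsum (fun i => rsum (fun j => p (s i) * p (s j))) = 1).
    rewrite -rsum_mul (rsum_perm s p); case: hp => _ ->; ring.
  move <-.
  rewrite (rsum_ext (g := fun _ => INR d * be + (al - be))); first by rewrite rsum_const; ring.
  move=> i.
  have e : forall j, Mx p i j = be + (if j == i then al - be else 0).
    move=> j; rewrite Mc eq_sym; case: eqP => _; rewrite -/al -/be; ring.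
  by rewrite (rsum_ext e) rsum_split rsum_delta rsum_const.
have step6 : x * N + \big[Rplus/0]_(s : 'S_d) stellar_abs2 p s <= N.
  rewrite /N big_distrr -big_split; apply: sum_le => s /=.
  have := Estar_le p s; lra.
have Npos : 0 < N.
  rewrite /N (bigD1 1%g) //=.
  have : 0 <= \big[Rplus/0]_(i : 'S_d | i != 1%g) 1.
    apply: (big_ind (fun a => 0 <= a)) => //; [lra | move=> *; lra | move=> *; lra].
  move=> H.
  change (0 < 1 + \big[Rplus/0]_(i : 'S_d | i != 1%g) 1); lra.
rewrite step2 step3 in step6.
have hD : 2 <= INR d by apply: (le_INR 2); apply/leP.
rewrite -/Q.
have k1 : (INR d - 1) * (INR d * be) = N - N * Q by rewrite -step4; lra.
have k2 : (INR d - 1) * (x * N) <= INR d * (N - N * Q).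
  have : (INR d - 1) * (x * N + INR d * (al - be)) <= (INR d - 1) * N
    by apply: Rmult_le_compat_l; lra.
  have k0 : (INR d - 1)*(INR d * al) = (INR d - 1)*(N*Q) by rewrite step4.
  move=> H; nra.
have k3 : (INR d - 1) * x <= INR d * (1 - Q).
  apply: (Rmult_le_reg_r N) => //; nra.
apply: (Rmult_le_reg_r (INR d)); first lra.
rewrite /Rdiv Rmult_assoc Rinv_l; nra.
Qed.

Lemma upper d (hd : (2 <= d)%N) s (hs : 0 < s <= 1) :
  exists p : 'I_d -> R,
      prob_vec p /\ s <= E_star p /\
      1 - rsum (fun i => p i ^ 2) = s * (INR d - 1) / INR d.
Proof.
have h0 : (0 < d)%N by apply: leq_trans hd.
pose i0 : 'I_d := Ordinal h0.
have hD : 2 <= INR d by apply: (le_INR 2); apply/leP.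
pose u := sqrt (1 - s).
pose t := 1 - u.
have u0 : 0 <= u by apply: sqrt_pos.
have u1 : u <= 1.
  have H := sqrt_le_1_alt (1 - s) 1; rewrite sqrt_1 in H; apply: H; lra.
have uu : u * u = 1 - s by rewrite /u sqrt_sqrt; lra.
pose p := fun i : 'I_d => u * (if i == i0 then 1 else 0) + t / INR d.
have lin : forall (f : 'I_d -> R) (sg : 'S_d), rsum f = 0 ->
    rsum (fun i => f i * p (sg i)) = u * f ((sg^-1)%g i0).
  move=> f sg hf.
  have e : forall i, f i * p (sg i) =
     (if i == (sg^-1)%g i0 then u * f i else 0) + t / INR d * f i.
    move=> i; rewrite /p; case: (eqVneq i ((sg^-1)%g i0)) => [->|hne].
      by rewrite permKV eqxx; ring.
    case: eqP => [e|_]; last ring.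
    by move: hne; rewrite -e permK eqxx.
  by rewrite (rsum_ext e) rsum_split rsum_delta rsum_scal hf Rmult_0_r Rplus_0_r.
exists p; split; [split|split].
- move=> i; rewrite /p; apply: Rplus_le_le_0_compat.
    apply: Rmult_le_pos => //; case: eqP => _; lra.
  rewrite /Rdiv; apply: Rmult_le_pos; first by rewrite /t; lra.
  apply: Rlt_le; apply: Rinv_0_lt_compat; lra.
- rewrite rsum_split rsum_scal rsum_const (rsum_delta i0 (fun _ => 1)).
  rewrite /t; field; lra.
- apply: Estar_ge => sg; rewrite /stellar_abs2.
  rewrite (lin (fun i => cos (theta i))) ?sum_cos_theta //.
  rewrite (lin (fun i => sin (theta i))) ?sum_sin_theta //.
  have := sin2_cos2 (theta ((sg^-1)%g i0)); rewrite /Rsqr => H.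
  have -> : (u * cos (theta ((sg^-1)%g i0))) ^ 2 + (u * sin (theta ((sg^-1)%g i0))) ^ 2
     = (u * u) * (sin (theta ((sg^-1)%g i0)) * sin (theta ((sg^-1)%g i0)) + cos (theta ((sg^-1)%g i0)) * cos (theta ((sg^-1)%g i0))) by ring.
  rewrite H uu; lra.
- have e : forall i, p i ^ 2 =
     (if i == i0 then u * u + 2 * u * (t / INR d) else 0) + (t / INR d) ^ 2.
    move=> i; rewrite /p; case: eqP => _; ring.
  rewrite (rsum_ext e) rsum_split rsum_delta rsum_const.
  have -> : s = 1 - u * u by lra.
  rewrite /t; field; lra.
Qed.

Theorem mainTheorem9 (d : nat) (hd : (2 <= d)%N) (s : R) (hs : 0 < s <= 1) :
  (exists p : 'I_d -> R,
      prob_vec p /\ s <= E_star p /\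
      1 - rsum (fun i => p i ^ 2) = s * (INR d - 1) / INR d)
  /\
  (forall p : 'I_d -> R,
      prob_vec p -> s <= E_star p ->
      s * (INR d - 1) / INR d <= 1 - rsum (fun i => p i ^ 2)).
Proof.
split; first exact: upper.
move=> p hp hx; exact: lower.
Qed.
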